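(* Let $\boldsymbol{R}=[r_{ij}]\in\mathbb{C}^{N\times N}$ be Hermitian and $2N$-dominant, i.e. $r_{ii}\ge 2N\sum_{j\ne i}|r_{ij}|$ for all $i$. Define $\delta_1=0$ and $\delta_k=\sum_{i=1}^{k-1}|r_{ki}|$ for $k=2,\ldots,N$; define $a_k=2\delta_k+4\sum_{i=1}^{N-k}\delta_{k+i}$ for $k=1,\ldots,N-1$ and $a_N=2\delta_N$; and let $\overline{\boldsymbol{R}}=\boldsymbol{R}-\mathrm{Diag}(\boldsymbol{R})+\mathrm{diag}(a_1,\ldots,a_N)$. Let $\boldsymbol{g}\in\Omega^N$ be the output of the greedy method: $\boldsymbol{g}(1)=1$ and, for $k=1,\ldots,N-1$, $\boldsymbol{g}(k+1)$ is a maximizer over $x\in\Omega$ of $[\boldsymbol{g}(1),\ldots,\boldsymbol{g}(k),x]^H\boldsymbol{R}_{k+1}[\boldsymbol{g}(1),\ldots,\boldsymbol{g}(k),x]$. Then $\mathrm{Tr}(\overline{\boldsymbol{R}})\le\mathrm{Tr}(\boldsymbol{R})$ and \[ \boldsymbol{g}^H\boldsymbol{R}\boldsymbol{g}\ \ge\ \Big(1-\frac{1}{e}+\frac{1}{e}\cdot\frac{1}{2N+1}\Big)\max_{\boldsymbol{s}\in\Omega^N}\boldsymbol{s}^H\boldsymbol{R}\boldsymbol{s}. \]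
   Context: $\Omega=\{x\in\mathbb{C}:|x|=1\}$. $\boldsymbol{R}_m$ denotes the principal submatrix of $\boldsymbol{R}$ formed by its first $m$ rows and first $m$ columns, and $[c_1,\ldots,c_m]$ denotes the column vector with entries $c_1,\ldots,c_m$. A square matrix $[r_{ij}]_{N\times N}$ is $M$-dominant if $r_{ii}\ge M\sum_{j=1,j\ne i}^N|r_{ij}|$ for all $i$. $\mathrm{Diag}(\boldsymbol{R})$ is the diagonal matrix with the diagonal of $\boldsymbol{R}$; $\mathrm{diag}(a_1,\ldots,a_N)$ is the diagonal matrix with entries $a_1,\ldots,a_N$. $\mathrm{Tr}$ is the trace. Empty sums are zero. *)

(* Defs.v *)
From HB Require Import structures.
From mathcomp Require Import all_boot all_order all_algebra.
From mathcomp Require Import complex.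
From mathcomp Require Import reals.
From mathcomp Require Import sequences exp.
Set Implicit Arguments. Unset Strict Implicit. Unset Printing Implicit Defensive.
Import Order.TTheory GRing.Theory Num.Theory.
Local Open Scope ring_scope.
Local Open Scope complex_scope.

Section Defs.
Variable R : realType.
Local Notation C := R[i].

Definition hermitian_mx n (A : 'M[C]_n) : Prop := forall i j, A j i = (A i j)^*.

Definition dominant n (M : C) (A : 'M[C]_n) : Prop :=
  forall i, M * (\sum_(j < n | j != i) `|A i j|) <= A i i.

Definition hform n (A : 'M[C]_n) (v : 'cV[C]_n) : C :=
  ((map_mx Num.conj v)^T *m A *m v) 0 0.

Definition psub n m (h : (m <= n)%N) (A : 'M[C]_n) : 'M[C]_m :=
  \matrix_(i < m, j < m) A (widen_ord h i) (widen_ord h j).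

(* delta_k (0-indexed: k = 0 corresponds to delta_1 = 0) *)
Definition delta n (A : 'M[C]_n) (k : 'I_n) : C :=
  \sum_(i < n | (i < k)%N) `|A k i|.

(* a_k = 2 delta_k + 4 sum_{i=1}^{N-k} delta_{k+i} (the sum is empty for k = N) *)
Definition acoef n (A : 'M[C]_n) (k : 'I_n) : C :=
  2 * delta A k + 4 * \sum_(j < n | (k < j)%N) delta A j.

Definition Rbar n (A : 'M[C]_n) : 'M[C]_n :=
  A - diag_mx (\row_i A i i) + diag_mx (\row_i acoef A i).

Definition gext n (g : 'cV[C]_n) (m : 'I_n) (x : C) : 'cV[C]_m.+1 :=
  \col_(i < m.+1) (if i == ord_max then x else g (widen_ord (ltn_ord m) i) 0).

Definition greedy_output n (A : 'M[C]_n) (g : 'cV[C]_n) : Prop :=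
  (forall i, `|g i 0| = 1) /\
  (forall i : 'I_n, (i : nat) = 0%N -> g i 0 = 1) /\
  (forall m : 'I_n, (0 < m)%N -> forall x : C, `|x| = 1 ->
     hform (psub (ltn_ord m) A) (gext g m x) <= hform (psub (ltn_ord m) A) (gext g m (g m 0))).

Definition eulerC : C := (expR (1 : R))%:C.
End Defs.

(* Main.v *)
Require Import Defs.
From HB Require Import structures.
From mathcomp Require Import all_boot all_order all_algebra.
From mathcomp Require Import complex.
From mathcomp Require Import reals.
From mathcomp Require Import sequences exp.
From mathcomp Require Import ring lra zify.
Import Order.TTheory GRing.Theory Num.Theory.
Local Open Scope ring_scope.
Set Implicit Arguments. Unset Strict Implicit.


Section Aux.
Local Close Scope complex_scope.
Variable R : realType.
Local Notation C := R[i].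

Definition Fv (a : nat -> nat -> C) (w : nat -> C) m :=
  \sum_(i < m) \sum_(j < m) (w i)^* * a i j * w j.
Definition Qx (a : nat -> nat -> C) (w : nat -> C) m (x : C) :=
  \sum_(j < m) x^* * a m j * w j + \sum_(i < m) (w i)^* * a i m * x.

Lemma Fv_rec a w m : Fv a w m.+1 = Fv a w m + Qx a w m (w m) + (w m)^* * a m m * w m.
Proof.
rewrite /Fv /Qx big_ord_recr /=.
under eq_bigr do rewrite big_ord_recr /=.
rewrite big_split /= big_ord_recr /=.
rewrite !addrA; congr (_ + _); rewrite -!addrA; congr (_ + _); by rewrite addrC.
Qed.

Lemma Fv_eq a w w' m : (forall i, (i < m)%N -> w i = w' i) -> Fv a w m = Fv a w' m.
Proof.
move=> h; apply: eq_bigr => i _; apply: eq_bigr => j _.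
by rewrite !h.
Qed.

Lemma Qx_eq a w w' m x : (forall i, (i < m)%N -> w i = w' i) -> Qx a w m x = Qx a w' m x.
Proof.
move=> h; rewrite /Qx; congr (_ + _); apply: eq_bigr => j _; by rewrite h.
Qed.

Lemma QxN a w m (x : C) : Qx a w m (- x) = - Qx a w m x.
Proof.
rewrite /Qx opprD -!sumrN; congr (_ + _); apply: eq_bigr => j _;
  rewrite ?rmorphN /=; ring.
Qed.

Lemma hform_Fv k (B : 'M[C]_k) (u : 'cV[C]_k) (b : nat -> nat -> C) (w : nat -> C) :
  (forall i j : 'I_k, B i j = b i j) -> (forall i : 'I_k, u i 0 = w i) ->
  hform B u = Fv b w k.
Proof.
move=> hB hu; rewrite /hform /Fv mxE.
under eq_bigr do rewrite mxE mulr_suml.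
rewrite exchange_big /=; apply: eq_bigr => i _; apply: eq_bigr => j _.
by rewrite !mxE hB !hu.
Qed.


Variable n : nat.
Implicit Types A : 'M[C]_n.+1.

Definition an A (i j : nat) : C := A (inord i) (inord j).
Definition vn (g : 'cV[C]_n.+1) (i : nat) : C := g (inord i) 0.

Lemma an_ord A (i j : 'I_n.+1) : A i j = an A i j.
Proof. by rewrite /an !inord_val. Qed.

Lemma vn_ord (g : 'cV[C]_n.+1) (i : 'I_n.+1) : g i 0 = vn g i.
Proof. by rewrite /vn inord_val. Qed.

Lemma hform_full A (g : 'cV[C]_n.+1) : hform A g = Fv (an A) (vn g) n.+1.
Proof. apply: hform_Fv => i *; [exact: an_ord | exact: vn_ord]. Qed.

Lemma diag_term (x a : C) : `|x| = 1 -> x^* * a * x = a.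
Proof. move=> h; by rewrite [x^* * a]mulrC -mulrA -normCKC h expr1n mulr1. Qed.

Lemma Qx_greedy A (g : 'cV[C]_n.+1) : greedy_output A g -> forall m, (m < n.+1)%N ->
  0 <= Qx (an A) (vn g) m (vn g m).
Proof.
case=> hn [h1 hg] [|m] hm.
  by rewrite /Qx !big_ord0 addr0.
set mo : 'I_n.+1 := Ordinal hm.
have hx : `|- vn g m.+1| = 1 by rewrite normrN /vn hn.
have := hg mo isT _ hx.
have hw : forall i : 'I_m.+2, widen_ord (ltn_ord mo) i = inord i.
  move=> i; apply: val_inj; rewrite /= inordK //.
  exact: leq_trans (ltn_ord i) hm.
have hgm : g mo 0 = vn g m.+1 by rewrite vn_ord.
rewrite hgm.
have hF : forall x, hform (psub (ltn_ord mo) A) (gext g mo x) =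
   Fv (an A) (vn g) m.+1 + Qx (an A) (vn g) m.+1 x + x^* * an A m.+1 m.+1 * x.
  move=> x.
  rewrite (@hform_Fv _ _ _ (an A) (fun i => if i == m.+1 then x else vn g i)).
  - rewrite Fv_rec eqxx (@Fv_eq _ _ (vn g)); last by move=> i /ltn_eqF ->.
    by rewrite (@Qx_eq _ _ (vn g)) // => i /ltn_eqF ->.
  - by move=> i j; rewrite mxE !hw.
  - move=> i; rewrite mxE.
    have -> : (i == ord_max) = (i == m.+1 :> nat) by [].
    by case: eqP => // _; rewrite hw.
rewrite !hF QxN.
have -> : (- vn g m.+1)^* * an A m.+1 m.+1 * - vn g m.+1
   = (vn g m.+1)^* * an A m.+1 m.+1 * vn g m.+1 by rewrite rmorphN /=; ring.
rewrite lerD2r lerD2l => h.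
set Q := Qx _ _ _ _ in h *.
have : 0 <= Q - - Q by rewrite subr_ge0.
rewrite opprK -mulr2n.
by rewrite pmulrn_lge0.
Qed.



Lemma g_lower A (g : 'cV[C]_n.+1) : greedy_output A g -> forall m, (m <= n.+1)%N ->
  \sum_(i < m) an A i i <= Fv (an A) (vn g) m.
Proof.
move=> hG; have hn := hG.1.
elim=> [|m IH] hm; first by rewrite /Fv !big_ord0.
rewrite Fv_rec big_ord_recr /= diag_term; last by rewrite /vn hn.
rewrite lerD2r -[X in X <= _]addr0 lerD ?IH ?(ltnW hm) //.
exact: Qx_greedy.
Qed.

Definition dl A (k : nat) : C := \sum_(i < k) `|an A k i|.

Lemma dl_ge0 A k : 0 <= dl A k.
Proof. by apply: sumr_ge0 => i _. Qed.

Lemma Qx_upper A (s : 'cV[C]_n.+1) : hermitian_mx A -> (forall i, `|s i 0| = 1) ->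
  forall m, Qx (an A) (vn s) m (vn s m) <= 2 * dl A m.
Proof.
move=> hH hs m.
have hv : forall k, `|vn s k| = 1 by move=> k; rewrite /vn hs.
set Z := \sum_(j < m) (vn s m)^* * an A m j * vn s j.
have -> : Qx (an A) (vn s) m (vn s m) = Z + Z^*.
  rewrite /Qx rmorph_sum; congr (_ + _); apply: eq_bigr => j _.
  rewrite !rmorphM /= conjCK /an hH; ring.
have hr : Z + Z^* \is Num.real by rewrite CrealE rmorphD /= conjCK addrC.
apply: le_trans (real_ler_norm hr) _.
apply: le_trans (ler_normD _ _) _.
rewrite norm_conjC -mulr2n mulr_natl lerMn2r /=.
apply: le_trans (ler_norm_sum _ _ _) _.
apply: ler_sum => j _.
by rewrite !normrM norm_conjC !hv mul1r mulr1.
Qed.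

Lemma s_upper A (s : 'cV[C]_n.+1) : hermitian_mx A -> (forall i, `|s i 0| = 1) ->
  forall m, Fv (an A) (vn s) m <= \sum_(i < m) an A i i + 2 * \sum_(k < m) dl A k.
Proof.
move=> hH hs; elim=> [|m IH]; first by rewrite /Fv !big_ord0 mulr0 addr0.
rewrite Fv_rec !big_ord_recr /= diag_term; last by rewrite /vn hs.
set S := \sum_(i < m) _; set D := \sum_(k < m) _.
have -> : S + an A m m + 2 * (D + dl A m) = S + 2 * D + 2 * dl A m + an A m m by ring.
by rewrite lerD2r lerD // Qx_upper.
Qed.



Lemma delta_ge0 A k : 0 <= delta A k.
Proof. by apply: sumr_ge0 => i _. Qed.

Lemma delta_dl A (k : 'I_n.+1) : delta A k = dl A k.
Proof.
rewrite /dl (big_ord_widen n.+1 (fun i => `|an A k i|) (ltnW (ltn_ord k))).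
by apply: eq_bigr => i _; rewrite /an !inord_val.
Qed.

Lemma off_sum A : hermitian_mx A ->
  \sum_(i < n.+1) \sum_(j < n.+1 | j != i) `|A i j| = 2 * \sum_(i < n.+1) delta A i.
Proof.
move=> hH.
have -> : \sum_(i < n.+1) \sum_(j < n.+1 | j != i) `|A i j| =
   \sum_(i < n.+1) delta A i + \sum_(i < n.+1) \sum_(j < n.+1 | (i < j)%N) `|A i j|.
  rewrite -big_split; apply: eq_bigr => i _.
  rewrite (bigID (fun j : 'I_n.+1 => (j < i)%N)) /=; congr (_ + _).
    apply: eq_bigl => j; rewrite -val_eqE /=; by case: ltngtP.
  apply: eq_bigl => j; rewrite -val_eqE /=; by case: ltngtP.
suff -> : \sum_(i < n.+1) \sum_(j < n.+1 | (i < j)%N) `|A i j| = \sum_(i < n.+1) delta A i by ring.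
transitivity (\sum_(i < n.+1) \sum_(j < n.+1) (if (i < j)%N then `|A i j| else 0)).
  by apply: eq_bigr => i _; rewrite big_mkcond.
rewrite exchange_big; apply: eq_bigr => j _; rewrite /delta [RHS]big_mkcond.
apply: eq_bigr => i _; case: ifP => // _.
by rewrite (hH j i) norm_conjC.
Qed.

Lemma tr_lower A : hermitian_mx A -> dominant (2 * (n.+1)%:R) A ->
  2 * (n.+1)%:R * (2 * \sum_(i < n.+1) delta A i) <= \tr A.
Proof.
move=> hH hD; rewrite -off_sum // mulr_sumr /mxtrace.
by apply: ler_sum => i _; apply: hD.
Qed.

Lemma acoef_le A k : acoef A k <= 4 * \sum_(i < n.+1) delta A i.
Proof.
rewrite /acoef.
apply: (@le_trans _ _ (4 * (delta A k + \sum_(j < n.+1 | (k < j)%N) delta A j))).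
  rewrite mulrDr lerD2r.
  have := delta_ge0 A k; set x := delta A k => hx.
  rewrite -subr_ge0.
  have -> : 4 * x - 2 * x = 2 * x by ring.
  by apply: mulr_ge0.
apply: ler_wpM2l => //; rewrite [X in _ <= X](bigD1 k) //= lerD2l.
rewrite [X in _ <= X]big_mkcond [X in X <= _]big_mkcond.
apply: ler_sum => j _.
case hkj: (k < j)%N.
  have -> : (j != k) by apply/eqP => e; rewrite e ltnn in hkj.
  done.
by case: ifP => _ //; apply: delta_ge0.
Qed.

Lemma tr_Rbar A : \tr (Rbar A) = \sum_(i < n.+1) acoef A i.
Proof.
rewrite /mxtrace; apply: eq_bigr => i _.
by rewrite !mxE eqxx !mulr1n subrr add0r.
Qed.

End Aux.
Section Sc.
Variable R : realType.
Local Notation C := R[i].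
Local Open Scope complex_scope.

Lemma e_le4 : expR (1:R) <= 4.
Proof.
have h := expR_ge1Dx (- (1/2 : R)).
have h2 := expRxMexpNx_1 (1/2 : R).
have ha := expR_gt0 (1/2 : R).
have -> : (1:R) = 2%:R * (1/2) by field.
rewrite expRM_natl.
set a := expR (1/2) in h2 ha *; set b := expR (- (1/2)) in h h2.
have : a <= 2 by nra.
nra.
Qed.

Lemma real_ineq (k t d e : R) : 0 < k -> 0 <= d -> k * d <= t -> 1 <= e ->
  (e <= k \/ d = 0) ->
  0 <= 1 - 1/e + 1/e * (1/(k + 1)) /\ (1 - 1/e + 1/e * (1/(k + 1))) * (t + d) <= t.
Proof.
move=> hk hd hkd he hor.
have he0 : e != 0 by apply/eqP => h; rewrite h in he; lra.
have hk1 : k + 1 != 0 by apply/eqP => h; lra.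
have -> : 1 - 1/e + 1/e * (1/(k + 1)) = (e * (k + 1) - k) / (e * (k + 1)) by field; rewrite hk1 he0.
have hp : 0 < e * (k + 1) by nra.
split; first by apply: divr_ge0; nra.
rewrite mulrAC ler_pdivrMr //.
have h1 : 0 <= (k - e) * (k + 1) * d.
  case: hor => [h|->]; last by rewrite mulr0.
  apply: mulr_ge0 => //; nra.
have h2 : 0 <= k * (t - k * d) by nra.
nra.
Qed.

Lemma scalar_ineq (k : R) (T D hs hg : C) : 0 < k -> 0 <= D -> k%:C * D <= T ->
  hs <= T + D -> T <= hg -> (expR 1 <= k \/ D = 0) ->
  (1 - 1/(expR 1)%:C + 1/(expR 1)%:C * (1/(k%:C + 1))) * hs <= hg.
Proof.
move=> hk hD hkD hhs hhg hor.
have hT : 0 <= T.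
  apply: le_trans hkD; apply: mulr_ge0 => //; rewrite ler0c; exact: ltW.
have [d hdd] : exists d, D = d%:C by apply/complex_realP; exact: ger0_real.
subst D.
have [t ht] : exists t, T = t%:C by apply/complex_realP; exact: ger0_real.
rewrite ht in hkD hhs hhg hT.
rewrite ler0c in hD; rewrite -rmorphM lecR in hkD.
have he : 1 <= expR (1:R) by apply: ltW; rewrite expR_gt1.
have hor' : expR 1 <= k \/ d = 0.
  case: hor => h; [by left | right]. by case: h.
have [hc1 hc2] := @real_ineq k t d (expR 1) hk hD hkD he hor'.
have -> : 1 - 1/(expR 1)%:C + 1/(expR 1)%:C * (1/(k%:C + 1)) =
  (1 - 1/expR 1 + 1/expR 1 * (1/(k + 1)))%:C.
  by rewrite !(rmorphD, rmorphN, rmorphM, fmorphV, rmorph1).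
apply: le_trans (ler_wpM2l _ hhs) _; first by rewrite ler0c.
apply: le_trans hhg.
by rewrite -rmorphD -rmorphM lecR.
Qed.
End Sc.

Unset Implicit Arguments. Set Strict Implicit.
Local Open Scope complex_scope.

Theorem proposition2 (R : realType) (n : nat) (A : 'M[R[i]]_n.+1) (g : 'cV[R[i]]_n.+1) :
  hermitian_mx A ->
  dominant (2 * (n.+1)%:R) A ->
  greedy_output A g ->
  \tr (Rbar A) <= \tr A /\
  (forall s : 'cV[R[i]]_n.+1, (forall i, `|s i 0| = 1) ->
     (1 - 1 / eulerC R + 1 / eulerC R * (1 / (2 * (n.+1)%:R + 1))) * hform A s
       <= hform A g).
Proof.
move=> hH hD hG.
have hor : expR (1 : R) <= (2 * (n.+1)%:R : R) \/ \sum_(i < n.+1) delta A i = 0.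
  case: n A g hH hD hG => [|n'] A g hH hD hG.
    right; apply: big1 => i _; apply: big1 => j hj.
    have := ltn_ord i; rewrite ltnS leqn0 => /eqP hi; by rewrite hi ltn0 in hj.
  left; apply: le_trans (e_le4 R) _.
  rewrite -natrM ler_nat; lia.
set Dl := \sum_(i < n.+1) delta A i.
have hDl : 0 <= Dl by apply: sumr_ge0 => i _; apply: delta_ge0.
have hTr := tr_lower hH hD; rewrite -/Dl in hTr.
split.
  rewrite tr_Rbar; apply: le_trans hTr.
  apply: le_trans (ler_sum _ (fun k _ => acoef_le A k)) _.
  rewrite sumr_const card_ord -/Dl.
  have -> : 2 * (n.+1)%:R * (2 * Dl) = 4 * Dl *+ n.+1 by rewrite -mulr_natr; ring.
  by [].
move=> s hs.
have hgl := g_lower hG (leqnn n.+1).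
have hsu := s_upper hH hs n.+1.
have eT : \sum_(i < n.+1) an A i i = \tr A.
  by rewrite /mxtrace; apply: eq_bigr => i _; rewrite an_ord.
have eD : \sum_(k < n.+1) dl A k = Dl.
  by apply: eq_bigr => i _; rewrite delta_dl.
rewrite eT eD in hsu; rewrite eT in hgl.
rewrite !hform_full.
have ek : ((2 * (n.+1)%:R : R)%:C) = 2 * (n.+1)%:R :> R[i].
  by rewrite rmorphM !rmorph_nat.
have hk : (0 : R) < 2 * (n.+1)%:R by rewrite mulr_gt0 // ltr0n.
have := @scalar_ineq R (2 * (n.+1)%:R) (\tr A) (2 * Dl) _ _ hk.
rewrite ek /eulerC; apply => //.
- by apply: mulr_ge0.
- by case: hor => [h|h]; [left | right; rewrite /Dl h mulr0].
Qed.
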